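(* Let $n\ge 2$ and $d\ge1$ be integers and consider the test $\mathcal{T}_d$ described below. For every $i\in[n]$, the polynomial $f(x)=x_i-x_{n+i}^d$ on $\mathbb{R}^{2n}$ passes $\mathcal{T}_d$ with probability at least $1-\beta$, where $\beta=1/\log n$.
   Context: The test $\mathcal{T}_d$ takes as input a degree-$d$ real polynomial $f:\mathbb{R}^{2n}\to\mathbb{R}$. Set $\beta:=1/\log n$ and $\delta:=2^{-n^2}$. Generate $n$ i.i.d. bits $a_i\in\{0,1\}$ with $\Pr[a_i=1]=\beta$, $2n$ i.i.d. standard Gaussians $h_1,\dots,h_n,g_1,\dots,g_n\sim N(0,1)$, and a uniformly random $b\in\{-1,1\}$, all independent. Set $y\in\mathbb{R}^{2n}$ by $y_i=a_ih_i+g_i^d+b\delta$ and $y_{n+i}=g_i$ for $i\in[n]$. The test accepts (f passes) iff $\mathrm{sign}(f(y))=b$. *)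

(* Defs.v *)
From HB Require Import structures.
From mathcomp Require Import all_boot all_order all_algebra.
From mathcomp Require Import all_classical all_reals all_analysis.
Set Implicit Arguments. Unset Strict Implicit. Unset Printing Implicit Defensive.
Import Order.TTheory GRing.Theory Num.Theory.
Local Open Scope classical_set_scope.
Local Open Scope ring_scope.

Definition mutually_independent (d : measure_display) (T : measurableType d)
  (R : realType) (P : probability T R) (I : finType) (X : I -> {RV P >-> R}) :=
  forall (J : {set I}) (B : I -> set R), (forall i, measurable (B i)) ->
    P [set w | forall i, i \in J -> B i (X i w)] =
    (\prod_(i in J) P (X i @^-1` B i))%E.

Definition beta_par (R : realType) (n : nat) : R := (ln (n%:R : R) / ln 2)^-1.
Definition delta_par (R : realType) (n : nat) : R := (2 ^- (n ^ 2)%N).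

(* The query point y in R^{2n}, indexed by 'I_(n + n):
   y_i = a_i h_i + g_i^d + b delta  (first block),  y_{n+i} = g_i (second block). *)
Definition test_point (R : realType) (n d : nat) (a h g : 'I_n -> R) (b : R)
  : 'I_(n + n) -> R :=
  fun k => match fintype.split k with
           | inl i => a i * h i + g i ^+ d + b * delta_par R n
           | inr i => g i
           end.

Definition test_family (d : measure_display) (T : measurableType d)
  (R : realType) (P : probability T R) (n : nat)
  (a h g : 'I_n -> {RV P >-> R}) (b : {RV P >-> R}) :
  ('I_n + 'I_n + 'I_n + unit)%type -> {RV P >-> R} :=
  fun k => match k with
           | inl (inl (inl i)) => a i
           | inl (inl (inr i)) => h i
           | inl (inr i) => g i
           | inr _ => b
           end.

Definition pass_prob (d : measure_display) (T : measurableType d)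
  (R : realType) (P : probability T R) (n dd : nat)
  (a h g : 'I_n -> {RV P >-> R}) (b : {RV P >-> R})
  (f : ('I_(n + n) -> R) -> R) : \bar R :=
  P [set w | Num.sg (f (test_point dd (fun i => a i w) (fun i => h i w)
                                      (fun i => g i w) (b w))) = b w].

(* Main.v *)
Require Import Defs.
From HB Require Import structures.
From mathcomp Require Import all_boot all_order all_algebra.
From mathcomp Require Import all_classical all_reals all_analysis.
Import Order.TTheory GRing.Theory Num.Theory.
Local Open Scope classical_set_scope.
Local Open Scope ring_scope.

Lemma mpre (d : measure_display) (T : measurableType d) (R : realType)
  (f : T -> R) (B : set R) :
  measurable_fun setT f -> measurable B -> measurable (f @^-1` B).
Proof. by move=> mf mB; have := mf measurableT B mB; rewrite setTI. Qed.

Theorem mainTheorem3 (R : realType) (n dd : nat) (hn : (2 <= n)%N) (hd : (1 <= dd)%N)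
  (d : measure_display) (T : measurableType d) (P : probability T R)
  (a h g : 'I_n -> {RV P >-> R}) (b : {RV P >-> R})
  (ha1 : forall i, P (a i @^-1` [set 1]) = (beta_par R n)%:E)
  (ha0 : forall i, P (a i @^-1` [set 0]) = (1 - beta_par R n)%:E)
  (hh : forall i A, measurable A -> P (h i @^-1` A) = normal_prob 0 1 A)
  (hg : forall i A, measurable A -> P (g i @^-1` A) = normal_prob 0 1 A)
  (hb1 : P (b @^-1` [set 1]) = (1 / 2)%:E)
  (hbm1 : P (b @^-1` [set -1]) = (1 / 2)%:E)
  (hind : mutually_independent (test_family a h g b))
  (i : 'I_n) :
  ((1 - beta_par R n)%:E <=
   pass_prob dd a h g b (fun x : 'I_(n + n) -> R => (x (lshift n i) - x (rshift n i) ^+ dd)%R))%E.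
Proof.
set del := delta_par R n.
have del0 : 0 < del by rewrite /del /delta_par invr_gt0 exprn_gt0.
pose F := fun w => a i w * h i w + b w * del.
have mb : measurable_fun setT (b : T -> R) by exact: measurable_funPT.
have ma : measurable_fun setT (a i : T -> R) by exact: measurable_funPT.
have mh : measurable_fun setT (h i : T -> R) by exact: measurable_funPT.
have mF : measurable_fun setT F.
  rewrite /F; apply: measurable_realfun.measurable_funD.
    exact: measurable_realfun.measurable_funM.
  exact: measurable_realfun.measurable_funM.
pose M := (F @^-1` `]0, +oo[ `&` b @^-1` [set 1]) `|`
          (F @^-1` [set 0] `&` b @^-1` [set 0]) `|`
          (F @^-1` `]-oo, 0[ `&` b @^-1` [set -1]).
have mM : measurable M.
  apply: measurableU; first apply: measurableU;
    apply: measurableI; apply: mpre => //; exact: measurable_itv || exact: measurable_set1.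
have -> : pass_prob dd a h g b
   (fun x : 'I_(n + n) -> R => (x (lshift n i) - x (rshift n i) ^+ dd)%R) = P M.
  rewrite /pass_prob; congr (P _); apply/seteqP; split => w /=.
    rewrite /test_point.
    have -> : fintype.split (lshift n i) = inl i by rewrite -[lshift n i]/(unsplit (inl i)) unsplitK.
    have -> : fintype.split (rshift n i) = inr i by rewrite -[rshift n i]/(unsplit (inr i)) unsplitK.
    rewrite addrAC addrK -/del -/(F w).
    case: sgrP => [F0|Fp|Fn] bw; rewrite /M /= -bw.
    - by left; right; split.
    - by left; left; split => //; rewrite in_itv /= Fp.
    - by right; split => //; rewrite in_itv /= Fn.
  rewrite /test_point.
  have -> : fintype.split (lshift n i) = inl i by rewrite -[lshift n i]/(unsplit (inl i)) unsplitK.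
  have -> : fintype.split (rshift n i) = inr i by rewrite -[rshift n i]/(unsplit (inr i)) unsplitK.
  rewrite addrAC addrK -/del -/(F w).
  rewrite /M /= !in_itv /= => [[[[Fp ->]|[-> ->]]|[Fn ->]]].
  - by rewrite gtr0_sg //; move: Fp; rewrite andbT.
  - by rewrite sgr0.
  - by rewrite ltr0_sg //; move: Fn; rewrite andbT.
pose B := b @^-1` [set 1] `|` b @^-1` [set -1].
have mB : measurable B by apply: measurableU; apply: mpre => //; exact: measurable_set1.
have mA : measurable (a i @^-1` [set 0]) by apply: mpre => //; exact: measurable_set1.
have PB : P B = 1%E.
  have m1 : measurable (b @^-1` [set (1:R)]) by apply: mpre => //; exact: measurable_set1.
  have m2 : measurable (b @^-1` [set (-1:R)]) by apply: mpre => //; exact: measurable_set1.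
  rewrite /B measureU //; last first.
    apply/seteqP; split => w // /= [-> /eqP]; rewrite -subr_eq0 opprK.
    by rewrite (_ : 1 + 1 = 2%:R :> R) // pnatr_eq0.
  transitivity ((1 / 2 : R)%:E + (1 / 2 : R)%:E)%E; first by congr (_ + _)%E.
  by rewrite -EFinD -splitr.
have PnB : P (~` B) = 0%E by rewrite probability_setC // PB subee.
pose E := a i @^-1` [set 0] `&` B.
have mE : measurable E by exact: measurableI.
have EM : E `<=` M.
  move=> w [a0 [b1|b1]]; rewrite /preimage /= in a0 b1;
    rewrite /M /F /= a0 mul0r add0r b1.
  - by left; left; split => //; rewrite in_itv /= mul1r del0.
  - by right; split => //; rewrite in_itv /= mulN1r oppr_lt0 del0.
rewrite -(ha0 i).
apply: (@le_trans _ _ (P E)); last by apply: le_measure; rewrite ?inE.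
apply: (@le_trans _ _ (P (E `|` ~` B))).
  apply: le_measure; rewrite ?inE //; first exact: measurableU mE (measurableC mB).
  move=> w Aw; have [Bw|nBw] := pselect (B w); [by left|by right].
apply: le_trans (measureU2 _ mE (measurableC mB)) _.
have PnB' : (P (~` B) <= 0)%E by rewrite PnB.
exact: geeDl.
Qed.
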